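(* Let $d\geq 1$, $p\in[1,\infty)\setminus\{2\}$, and $\lambda_1,\dots,\lambda_d>0$. Then the equation $$\sum_{i=1}^{d}\frac{1-\beta^{3-\frac{1}{p}}\lambda_i}{1+\beta^{\frac{1}{p}}\lambda_i}=0$$ in the variable $\beta$ has exactly one positive root $\beta>0$. *)

(* Defs.v *)
From Stdlib Require Import Reals.
Open Scope R_scope.

Fixpoint sum_1_to (d : nat) (f : nat -> R) : R :=
  match d with
  | O => 0
  | S k => sum_1_to k f + f (S k)
  end.

(* left-hand side of the equation, for beta > 0 (Rpower x y = x^y, x > 0) *)
Definition eqn_lhs (d : nat) (p : R) (lam : nat -> R) (beta : R) : R :=
  sum_1_to d (fun i =>
    (1 - Rpower beta (3 - 1 / p) * lam i) / (1 + Rpower beta (1 / p) * lam i)).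

(* Main.v *)
Require Import Defs.
From Stdlib Require Import Reals Lra Lia Psatz.
Open Scope R_scope.

Definition T (a b l x : R) : R := (1 - Rpower x a * l) / (1 + Rpower x b * l).

Lemma Rpower_pos x c : 0 < Rpower x c.
Proof. unfold Rpower; apply exp_pos. Qed.

Lemma sum_le d f g : (forall i, (1 <= i <= d)%nat -> f i <= g i) -> sum_1_to d f <= sum_1_to d g.
Proof.
  induction d as [|k IH]; intros H; simpl; [lra|].
  assert (sum_1_to k f <= sum_1_to k g) by (apply IH; intros; apply H; lia).
  assert (f (S k) <= g (S k)) by (apply H; lia). lra.
Qed.

Lemma sum_lt d f g : (1 <= d)%nat -> (forall i, (1 <= i <= d)%nat -> f i < g i) -> sum_1_to d f < sum_1_to d g.
Proof.
  destruct d as [|k]; intros Hd H; [lia|]. simpl.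
  assert (sum_1_to k f <= sum_1_to k g) by (apply sum_le; intros; left; apply H; lia).
  assert (f (S k) < g (S k)) by (apply H; lia). lra.
Qed.

Lemma sum_zero d : sum_1_to d (fun _ => 0) = 0.
Proof. induction d; simpl; [lra|]. rewrite IHd; lra. Qed.

Lemma term_le_sum d f i : (forall j, (1 <= j <= d)%nat -> 0 <= f j) -> (1 <= i <= d)%nat -> f i <= sum_1_to d f.
Proof.
  induction d as [|k IH]; intros H Hi; [lia|]. simpl.
  destruct (Nat.eq_dec i (S k)) as [->|Hne].
  - assert (0 <= sum_1_to k f).
    { rewrite <- (sum_zero k). apply sum_le. intros; apply H; lia. }
    lra.
  - assert (f i <= sum_1_to k f) by (apply IH; [intros; apply H|]; lia).
    assert (0 <= f (S k)) by (apply H; lia). lra.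
Qed.

Lemma div_lt X Y A B : 0 < A -> 0 < B -> X * B < Y * A -> X / A < Y / B.
Proof.
  intros HA HB H.
  apply Rmult_lt_reg_r with (A * B); [nra|].
  replace (X / A * (A * B)) with (X * B) by (field; lra).
  replace (Y / B * (A * B)) with (Y * A) by (field; lra). exact H.
Qed.

Lemma term_decr a b l x y : 0 < b < a -> 0 < l -> 0 < x < y -> T a b l y < T a b l x.
Proof.
  intros Hab Hl Hxy. unfold T.
  replace a with ((a - b) + b) by ring. rewrite !Rpower_plus.
  assert (HP : Rpower x (a - b) < Rpower y (a - b)) by (apply Rlt_Rpower_l; lra).
  assert (Hv : Rpower x b < Rpower y b) by (apply Rlt_Rpower_l; lra).
  pose proof (Rpower_pos x (a-b)). pose proof (Rpower_pos x b).
  set (P := Rpower x (a - b)) in *. set (Q := Rpower y (a - b)) in *.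
  set (v := Rpower x b) in *. set (V := Rpower y b) in *.
  apply div_lt; try nra.
  assert (0 < Q * V - P * v) by nra.
  assert (0 < v * V * (Q - P)) by (apply Rmult_lt_0_compat; nra).
  nra.
Qed.

Lemma cont_Rpower c x : 0 < x -> continuity_pt (fun y => Rpower y c) x.
Proof.
  intros Hx. apply derivable_continuous_pt.
  exact (exist _ _ (derivable_pt_lim_power x c Hx)).
Qed.

Lemma cont_sum d (g : nat -> R -> R) x :
  (forall i, (1 <= i <= d)%nat -> continuity_pt (g i) x) ->
  continuity_pt (fun y => sum_1_to d (fun i => g i y)) x.
Proof.
  induction d as [|k IH]; intros H; simpl.
  - apply continuity_pt_const; intros u w; reflexivity.
  - apply (continuity_pt_plus (fun y => sum_1_to k (fun i => g i y)) (g (S k))).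
    + apply IH; intros; apply H; lia.
    + apply H; lia.
Qed.

Lemma cont_T a b l x : 0 < l -> 0 < x -> continuity_pt (T a b l) x.
Proof.
  intros Hl Hx. unfold T.
  apply (continuity_pt_div (fun y => 1 - Rpower y a * l) (fun y => 1 + Rpower y b * l)).
  - apply (continuity_pt_minus (fun _ => 1) (fun y => Rpower y a * l)).
    + apply continuity_pt_const; intros u w; reflexivity.
    + apply (continuity_pt_mult (fun y => Rpower y a) (fun _ => l)).
      * apply cont_Rpower; auto.
      * apply continuity_pt_const; intros u w; reflexivity.
  - apply (continuity_pt_plus (fun _ => 1) (fun y => Rpower y b * l)).
    + apply continuity_pt_const; intros u w; reflexivity.
    + apply (continuity_pt_mult (fun y => Rpower y b) (fun _ => l)).
      * apply cont_Rpower; auto.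
      * apply continuity_pt_const; intros u w; reflexivity.
  - pose proof (Rpower_pos x b). nra.
Qed.

Lemma pow_small x c : 0 < x < 1 -> 1 <= c -> Rpower x c <= x.
Proof.
  intros Hx Hc. unfold Rpower.
  assert (ln x < 0) by (rewrite <- ln_1; apply ln_increasing; lra).
  rewrite <- (exp_ln x) at 2 by lra.
  destruct (Req_dec c 1) as [->|Hne]; [rewrite Rmult_1_l; lra|].
  left; apply exp_increasing; nra.
Qed.

Lemma pow_big x c : 1 < x -> 1 <= c -> x <= Rpower x c.
Proof.
  intros Hx Hc. rewrite <- (Rpower_1 x) at 1 by lra.
  apply Rle_Rpower; lra.
Qed.

Theorem theorem2 (d : nat) (p : R) (lam : nat -> R) :
  (1 <= d)%nat -> 1 <= p -> p <> 2 ->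
  (forall i : nat, (1 <= i <= d)%nat -> 0 < lam i) ->
  exists! beta : R, 0 < beta /\ eqn_lhs d p lam beta = 0.
Proof.
  intros Hd Hp _ Hl.
  set (a := 3 - 1 / p). set (b := 1 / p).
  assert (Hb : 0 < b <= 1).
  { unfold b; split; [apply Rdiv_lt_0_compat; lra|].
    apply (Rmult_le_reg_r p); [lra|]. unfold Rdiv. rewrite Rmult_assoc, Rinv_l by lra. lra. }
  assert (Hab : 0 < b < a) by (unfold a; fold b; lra).
  assert (Ha1 : 1 <= a) by (unfold a; fold b; lra).
  assert (HE : forall x, eqn_lhs d p lam x = sum_1_to d (fun i => T a b (lam i) x)).
  { intros; reflexivity. }
  assert (Hdec : forall x y, 0 < x < y -> eqn_lhs d p lam y < eqn_lhs d p lam x).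
  { intros x y Hxy. rewrite !HE. apply sum_lt; auto. intros i Hi.
    apply term_decr; auto. }
  set (L := sum_1_to d lam).
  assert (HL : forall i, (1 <= i <= d)%nat -> lam i <= L).
  { intros; apply term_le_sum; auto. intros; left; apply Hl; auto. }
  assert (HL0 : 0 < L).
  { pose proof (HL 1%nat ltac:(lia)). pose proof (Hl 1%nat ltac:(lia)). lra. }
  set (x0 := 1 / (1 + L)).
  assert (Hx0 : 0 < x0 < 1).
  { unfold x0; split; [apply Rdiv_lt_0_compat; lra|].
    apply (Rmult_lt_reg_r (1 + L)); [lra|]. unfold Rdiv. rewrite Rmult_assoc, Rinv_l by lra. lra. }
  assert (Hf0 : 0 < eqn_lhs d p lam x0).
  { rewrite HE, <- (sum_zero d). apply sum_lt; auto. intros i Hi. unfold T.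
    pose proof (Hl i Hi). pose proof (HL i Hi). pose proof (pow_small x0 a Hx0 Ha1).
    pose proof (Rpower_pos x0 b). pose proof (Rpower_pos x0 a).
    assert (x0 * (1 + L) = 1) by (unfold x0, Rdiv; rewrite Rmult_1_l, Rinv_l; lra).
    apply Rdiv_lt_0_compat; nra. }
  set (M := 1 + sum_1_to d (fun i => 1 / lam i)).
  assert (HM : forall i, (1 <= i <= d)%nat -> 1 / lam i < M).
  { intros i Hi. unfold M.
    assert (1 / lam i <= sum_1_to d (fun i => 1 / lam i)); [|lra].
    apply (term_le_sum d (fun i => 1 / lam i)); auto.
    intros j Hj; left; apply Rdiv_lt_0_compat; [lra|apply Hl; auto]. }
  assert (HM1 : 1 < M).
  { unfold M. assert (0 < sum_1_to d (fun i => 1 / lam i)); [|lra].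
    rewrite <- (sum_zero d). apply sum_lt; auto. intros; apply Rdiv_lt_0_compat; [lra|apply Hl; auto]. }
  assert (HfM : eqn_lhs d p lam M < 0).
  { rewrite HE, <- (sum_zero d). apply sum_lt; auto. intros i Hi. unfold T.
    pose proof (Hl i Hi). pose proof (HM i Hi). pose proof (pow_big M a HM1 Ha1).
    pose proof (Rpower_pos M b).
    assert (1 < M * lam i).
    { assert (1 / lam i * lam i = 1) by (field; lra). nra. }
    unfold Rdiv. apply Rmult_neg_pos; [nra|]. apply Rinv_0_lt_compat; nra. }
  assert (Hx0M : x0 < M) by lra.
  destruct (Ranalysis5.IVT_interv (fun x => - eqn_lhs d p lam x) x0 M) as [z [Hz Hz0]].
  - intros y Hy. apply continuity_pt_opp.
    change (continuity_pt (fun x => sum_1_to d (fun i => T a b (lam i) x)) y).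
    apply cont_sum. intros i Hi. apply cont_T; [apply Hl; auto|lra].
  - exact Hx0M.
  - lra.
  - lra.
  - exists z. split; [split; lra|].
    intros y [Hy Hy0].
    destruct (Rtotal_order z y) as [H|[H|H]]; auto.
    + assert (eqn_lhs d p lam y < eqn_lhs d p lam z) by (apply Hdec; lra). lra.
    + assert (eqn_lhs d p lam z < eqn_lhs d p lam y) by (apply Hdec; lra). lra.
Qed.
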